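(* Let $t$ be a positive integer and let $M$ be a $t$-spike of order $r$. Then $r \ge 2t-1$.
   Context: For a positive integer $t$, a matroid $M$ is a $t$-spike of order $r$ (where $r\ge t$) if there is a partition $(A_1,\ldots,A_r)$ of $E(M)$ into 2-element sets (arms) such that, for every $t$-element subset $J\subseteq\{1,\dots,r\}$, the set $\bigcup_{j\in J}A_j$ is both a circuit and a cocircuit of $M$. *)

(* Defs.v *)
From mathcomp Require Import all_boot.
Set Implicit Arguments. Unset Strict Implicit. Unset Printing Implicit Defensive.

(* A matroid whose ground set is the whole finite type T, given by its
   independent sets (axioms I1-I3). *)
Record matroid (T : finType) := Matroid {
  indep : {set T} -> bool;
  indep_set0 : indep set0;
  indep_subset : forall X Y : {set T}, Y \subset X -> indep X -> indep Y;
  indep_augment : forall X Y : {set T}, indep X -> indep Y -> #|X| < #|Y| ->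
      exists2 y, y \in Y :\: X & indep (y |: X)
}.

Section MatroidNotions.
Variables (T : finType) (M : matroid T).

Definition is_basis (B : {set T}) : Prop :=
  indep M B /\ (forall X : {set T}, indep M X -> B \subset X -> X = B).

Definition is_circuit (C : {set T}) : Prop :=
  ~~ indep M C /\ (forall X : {set T}, X \proper C -> indep M X).

(* independent sets of the dual M^*: sets avoiding some basis of M *)
Definition coindep (X : {set T}) : Prop :=
  exists2 B, is_basis B & [disjoint X & B].

Definition is_cocircuit (C : {set T}) : Prop :=
  ~ coindep C /\ (forall X : {set T}, X \proper C -> coindep X).

Definition is_spike (t r : nat) : Prop :=
  t <= r /\
  exists A : 'I_r -> {set T},
    [/\ (forall i, #|A i| = 2),
        (forall i j, i != j -> [disjoint A i & A j]),
        \bigcup_(i < r) A i = [set: T] &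
        (forall J : {set 'I_r}, #|J| = t ->
           is_circuit (\bigcup_(j in J) A j) /\ is_cocircuit (\bigcup_(j in J) A j))].

End MatroidNotions.

(* Main.v *)
Require Import Defs.
From mathcomp Require Import all_boot.
From mathcomp Require Import zify.
From Stdlib Require Import Lia.

Lemma card_arms (T : finType) r (A : 'I_r -> {set T}) :
  (forall i, #|A i| = 2) -> (forall i j, i != j -> [disjoint A i & A j]) ->
  forall J : {set 'I_r}, #|\bigcup_(j in J) A j| = 2 * #|J|.
Proof.
move=> h2 hd.
suff H: forall n (J : {set 'I_r}), #|J| = n -> #|\bigcup_(j in J) A j| = 2 * #|J|.
  by move=> J; exact: (H _ J erefl).
elim=> [|n IH] J hJ.
  have -> : J = set0 by apply/eqP; rewrite -cards_eq0 hJ.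
  by rewrite big_set0 !cards0.
have: (0 < #|J|) by rewrite hJ.
case/card_gt0P => j jJ.
rewrite (big_setD1 j jJ) /= cardsU.
have -> : A j :&: \bigcup_(i in J :\ j) A i = set0.
  apply/eqP; rewrite setI_eq0; apply: bigcup_disjoint => i.
  rewrite in_setD1 => /andP[ij _]; apply: hd; by rewrite eq_sym.
rewrite cards0 subn0 h2 IH; last by rewrite (cardsD1 j J) jJ in hJ; case: hJ.
rewrite (cardsD1 j J) jJ; by rewrite mulnDr.
Qed.

Theorem lemma6p1 (T : finType) (M : matroid T) (t r : nat) :
  0 < t -> is_spike M t r -> 2 * t - 1 <= r.
Proof.
move=> t0 [tr [A [h2 hd hU hJ]]].
have hc := @card_arms _ _ A h2 hd.
pose J := [set widen_ord tr i | i in 'I_t].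
have cJ : #|J| = t.
  rewrite card_imset ?card_ord // => i j h; apply/val_inj; exact (congr1 val h).
have [[_ Cmin] [_ Dmin]] := hJ J cJ.
set C := \bigcup_(j in J) A j in Cmin Dmin.
have cC : #|C| = 2 * t by rewrite /C hc cJ.
have cT : #|T| = 2 * r.
  have E : \bigcup_(i < r) A i = \bigcup_(j in [set: 'I_r]) A j.
    apply/setP => x; apply/bigcupP/bigcupP => -[i _ xi]; exists i => //; by rewrite inE.
  by rewrite -cardsT -hU E hc cardsT card_ord.
have : 0 < #|C| by rewrite cC muln_gt0 t0.
case/card_gt0P => e eC.
have pr := properD1 eC.
have indI := Cmin _ pr.
have [B [indB maxB] disB] := Dmin _ pr.
have cI : #|C :\ e| = (2 * t).-1 by rewrite (cardsD1 e C) eC in cC; rewrite -cC.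
have lo : #|C :\ e| <= #|B|.
  rewrite leqNgt; apply/negP => lt.
  have [y /setDP[yI yB] indy] := indep_augment indB indI lt.
  have := maxB _ indy (subsetUr _ _) => eq.
  by move: yB; rewrite -eq setU11.
have sub : B \subset e |: ~: C.
  apply/subsetP => x xB; rewrite !inE.
  case: (x =P e) => //= xe; apply/negP => xC.
  have xCe : x \in C :\ e by rewrite !inE xC andbT; apply/eqP.
  by rewrite (disjointFr disB xCe) in xB.
have hi := subset_leq_card sub.
have := cardsC C; rewrite cT cC => hCC.
move: hi; rewrite cardsU1; move: lo; rewrite cI.
have : #|~: C| = 2 * r - 2 * t by rewrite -hCC addKn.
move=> ->.
case: (e \notin ~: C) => /=; lia.
Qed.
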